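(* Let $(\Omega,\mathcal{F},\mathbb{P},\theta,\varphi)$ be a discrete-time random dynamical system on a separable Hilbert space $\mathcal{H}$. Assume there exist a $\varphi$-invariant random point $A(\omega)$, some $\mu>0$ and measurable functions $0<\alpha(\omega)<\beta(\omega)<1$ such that the set $$U(\omega)=\Big\{x_0\in\bar B(A(\omega),\alpha(\omega)):\ \exists (x_n)_{n\in\mathbb{N}}\text{ with }\varphi_1(\theta_{-n}\omega,x_n)=x_{n-1}\text{ and }\|x_n-A(\theta_{-n}\omega)\|\le\beta(\omega)e^{-\mu n}\text{ for all }n\ge0\Big\}$$ consists of more than one point for $\mathbb{P}$-almost every $\omega$. Assume further that there exists some $x_0(\omega)\in U(\omega)\setminus A(\omega)$ such that the corresponding points $x_n(\omega)$, $n\ge 0$, chosen as in the definition of $U(\omega)$, are random points. Then $\varphi$ does not synchronize.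
   Context: $(\Omega,\mathcal{F},\mathbb{P},\theta)$ is a metric dynamical system: $(\Omega,\mathcal{F},\mathbb{P})$ is a probability space and $(\theta_n)_{n\in\mathbb{Z}}$ is a group of measurable maps with $\theta_0=\mathrm{id}$ leaving $\mathbb{P}$ invariant. A random dynamical system is a jointly measurable map $\varphi:\mathbb{N}_0\times\Omega\times\mathcal{H}\to\mathcal{H}$ with $\varphi_0(\omega,x)=x$, $\varphi_{s+t}(\omega,x)=\varphi_t(\theta_s\omega,\varphi_s(\omega,x))$ and $x\mapsto\varphi_t(\omega,x)$ continuous; it is assumed that there is a family of sub-$\sigma$-algebras $(\mathcal{F}_{s,t})_{s\le t}$ with $\theta_r^{-1}(\mathcal{F}_{s,t})=\mathcal{F}_{s+r,t+r}$, $\mathcal{F}_{t,u}\subset\mathcal{F}_{s,v}$ for $s\le t\le u\le v$, and $\varphi_t(\cdot,x)$ $\mathcal{F}_{0,t}$-measurable. A family $\{A(\omega)\}_{\omega\in\Omega}$ of non-empty subsets of $\mathcal{H}$ is a random point (resp. random compact set) if it is $\mathbb{P}$-a.s. a single point (resp. compact set) and $\omega\mapsto\inf_{a\in A(\omega)}\|x-a\|$ is $\mathcal{F}$-measurable for each $x\in\mathcal{H}$; it is $\varphi$-invariant if $\varphi_t(\omega,A(\omega))=A(\theta_t\omega)$ for all $t\ge0$ and almost all $\omega$. A random compact set $A$ is a weak attractor if it is $\varphi$-invariant and for every compact $B\subset\mathcal{H}$, $\sup_{x\in B}\inf_{a\in A(\omega)}\|\varphi_t(\theta_{-t}\omega,x)-a\|\to0$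 in probability as $t\to\infty$. Synchronization occurs if there is a weak attractor $A(\omega)$ which is a singleton for $\mathbb{P}$-almost every $\omega$. $\bar B(x,r)$ is the closed ball of radius $r$ about $x$. *)

(* Defs.v *)
From HB Require Import structures.
From mathcomp Require Import all_boot all_order all_algebra.
From mathcomp Require Import all_classical all_reals all_analysis.
Set Implicit Arguments. Unset Strict Implicit. Unset Printing Implicit Defensive.
Import Order.TTheory GRing.Theory Num.Theory.
Import numFieldNormedType.Exports.
Local Open Scope classical_set_scope.
Local Open Scope ring_scope.

Section Defs.
Context (R : realType).

Definition is_inner_product (H : normedModType R) (ip : H -> H -> R) :=
  [/\ (forall x y, ip x y = ip y x),
      (forall a x y z, ip (a *: x + y) z = a * ip x z + ip y z)
    & (forall x, ip x x = `|x| ^+ 2)].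

Definition separable_hilbert (H : completeNormedModType R) :=
  (exists ip : H -> H -> R, is_inner_product ip) /\
  (exists D : set H, countable D /\ dense D).

Definition borelH (H : normedModType R) : set (set H) := <<s [set U | open U] >>.

Context (d : measure_display) (Omega : measurableType d) (P : probability Omega R).

Definition metric_dynamical_system (theta : int -> Omega -> Omega) :=
  [/\ (forall w, theta 0 w = w),
      (forall m n w, theta (m + n) w = theta m (theta n w)),
      (forall n, measurable_fun [set: Omega] (theta n))
    & (forall n (A : set Omega), measurable A -> P (theta n @^-1` A) = P A)].

Context (H : normedModType R).

Definition prod_sigma : set (set (Omega * H)) :=
  <<s [set A `*` B | A in [set A : set Omega | measurable A] &
                     B in borelH (H:=H)] >>.

(** ** Random dynamical system (discrete time N_0) over theta, with the
    standing filtration assumption. *)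
Definition random_dynamical_system (theta : int -> Omega -> Omega)
    (phi : nat -> Omega -> H -> H) :=
  [/\ (forall w x, phi 0%N w x = x),
      (forall s t w x, phi (s + t)%N w x = phi t (theta s%:Z w) (phi s w x)),
      (forall t w, continuous (phi t w)),
      (forall t B, borelH B ->
          prod_sigma ((fun p : Omega * H => phi t p.1 p.2) @^-1` B))
    & exists Fst : int -> int -> set (set Omega),
      [/\ (forall s t, s <= t ->
             sigma_algebra [set: Omega] (Fst s t) /\
             Fst s t `<=` [set A | measurable A]),
          (forall r s t, s <= t ->
             [set theta r @^-1` A | A in Fst s t] = Fst (s + r) (t + r)),
          (forall s t u v, s <= t -> t <= u -> u <= v -> Fst t u `<=` Fst s v)
        & (forall (t : nat) x B, borelH B ->
             Fst 0 t%:Z ((fun w => phi t w x) @^-1` B))]].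

Definition dist_set (x : H) (A : set H) : R := inf [set `|x - a| | a in A].

Definition random_point (A : Omega -> set H) :=
  [/\ (forall w, A w !=set0),
      {ae P, forall w, exists a, A w = [set a]}
    & (forall x, measurable_fun [set: Omega] (fun w => dist_set x (A w)))].

Definition random_compact_set (A : Omega -> set H) :=
  [/\ (forall w, A w !=set0),
      {ae P, forall w, compact (A w)}
    & (forall x, measurable_fun [set: Omega] (fun w => dist_set x (A w)))].

Definition phi_invariant (theta : int -> Omega -> Omega)
    (phi : nat -> Omega -> H -> H) (A : Omega -> set H) :=
  forall t : nat, {ae P, forall w, phi t w @` A w = A (theta t%:Z w)}.

Definition weak_attractor (theta : int -> Omega -> Omega)
    (phi : nat -> Omega -> H -> H) (A : Omega -> set H) :=
  [/\ random_compact_set A, phi_invariant theta phi A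
    & forall B : set H, compact B -> forall eps : R, 0 < eps ->
        (fun t : nat => P [set w | eps <
           sup [set dist_set (phi t (theta (- t%:Z) w) x) (A w) | x in B]])
        @ \oo --> 0%E].

Definition synchronizes (theta : int -> Omega -> Omega)
    (phi : nat -> Omega -> H -> H) :=
  exists A : Omega -> set H, weak_attractor theta phi A /\
    {ae P, forall w, exists a, A w = [set a]}.

Definition backward_seq (theta : int -> Omega -> Omega)
    (phi : nat -> Omega -> H -> H) (A : Omega -> set H) (mu : R)
    (beta : Omega -> R) (w : Omega) (x : nat -> H) :=
  (forall n : nat, phi 1%N (theta (- n.+1%:Z) w) (x n.+1) = x n) /\
  (forall n : nat, dist_set (x n) (A (theta (- n%:Z) w))
                   <= beta w * expR (- (mu * n%:R))).

Definition U_set (theta : int -> Omega -> Omega)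
    (phi : nat -> Omega -> H -> H) (A : Omega -> set H) (mu : R)
    (alpha beta : Omega -> R) (w : Omega) : set H :=
  [set x0 | dist_set x0 (A w) <= alpha w /\
     exists x : nat -> H, x 0%N = x0 /\ backward_seq theta phi A mu beta w x].

End Defs.

(* Main.v *)
Require Import Defs.
From HB Require Import structures.
From mathcomp Require Import all_boot all_order all_algebra.
From mathcomp Require Import all_classical all_reals all_analysis.
From mathcomp Require Import lra zify.
Set Implicit Arguments. Unset Strict Implicit. Unset Printing Implicit Defensive.
Import Order.TTheory GRing.Theory Num.Theory.
Import numFieldNormedType.Exports.
Local Open Scope classical_set_scope.
Local Open Scope ring_scope.

Section DistSet.
Context {R : realType} {H : normedModType R}.

Lemma ds_has_lb (x : H) (S : set H) : has_lbound [set `|x - a| | a in S].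
Proof. by exists 0 => _ [a _ <-]. Qed.

Lemma ds_le (x s : H) (S : set H) : S s -> dist_set x S <= `|x - s|.
Proof. by move=> Ss; apply: (ge_inf (ds_has_lb x S)); exists s. Qed.

Lemma ds_ge0 (x : H) (S : set H) : S !=set0 -> 0 <= dist_set x S.
Proof.
move=> [s Ss]; apply: lb_le_inf; first by exists `|x - s|, s.
by move=> _ [a _ <-].
Qed.

Lemma ds_lip (x y : H) (S : set H) : S !=set0 ->
  dist_set x S <= `|x - y| + dist_set y S.
Proof.
move=> [s0 Ss0]; rewrite -lerBlDl; apply: lb_le_inf; first by exists `|y - s0|, s0.
move=> _ [a Sa <-]; rewrite lerBlDl; apply: le_trans (ds_le x Sa) _.
by rewrite -(subrKA y) ler_normD.
Qed.

Lemma ds1 (x y : H) : dist_set x [set y] = `|x - y|.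
Proof. by rewrite /dist_set image_set1 inf1. Qed.

Lemma ds_lipabs (x y : H) (S : set H) : S !=set0 ->
  `|dist_set x S - dist_set y S| <= `|x - y|.
Proof.
move=> S0; have h1 := ds_lip x y S0; have h2 := ds_lip y x S0.
rewrite distrC in h2; rewrite ler_norml; apply/andP; split; lra.
Qed.

End DistSet.

Section Meas.
Context {R : realType} {d : measure_display} {Omega : measurableType d}.

Lemma meas_lt (f : Omega -> R) e : measurable_fun setT f -> measurable [set w | e < f w].
Proof.
move=> mf; have := mf measurableT `]e, +oo[%classic (measurable_itv _).
rewrite setTI; congr measurable; apply/seteqP; split => w /=;
  by rewrite /= in_itv /= andbT.
Qed.

Lemma meas_gt (f : Omega -> R) e : measurable_fun setT f -> measurable [set w | f w < e].
Proof.
move=> mf; have := mf measurableT `]-oo, e[%classic (measurable_itv _).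
rewrite setTI; congr measurable; apply/seteqP; split => w /=;
  by rewrite /= in_itv /=.
Qed.

Lemma meas_le (f : Omega -> R) e : measurable_fun setT f -> measurable [set w | f w <= e].
Proof.
move=> mf; have := mf measurableT `]-oo, e]%classic (measurable_itv _).
rewrite setTI; congr measurable; apply/seteqP; split => w /=;
  by rewrite /= in_itv /=.
Qed.

Context {H : normedModType R}.

Lemma exists_small_inv (e : R) : 0 < e -> exists n : nat, n.+1%:R^-1 < e.
Proof.
move=> e0; have := near_infty_natSinv_lt (PosNum e0).
by move=> [N _ hN]; exists N; apply: hN => /=.
Qed.

Lemma meas_dist_comp (u : nat -> H)
  (hu : forall x r, 0 < r -> exists n, `|x - u n| < r)
  (S : Omega -> set H) (S0 : forall w, S w !=set0)
  (hS : forall y, measurable_fun setT (fun w => dist_set y (S w)))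
  (h : Omega -> H) (hh : forall y r, measurable [set w | `|y - h w| < r]) (e : R) :
  measurable [set w | e < dist_set (h w) (S w)].
Proof.
have -> : [set w | e < dist_set (h w) (S w)] =
  \bigcup_n \bigcup_m ([set w | `|u m - h w| < n.+1%:R^-1] `&`
                        [set w | e + n.+1%:R^-1 < dist_set (u m) (S w)]).
  apply/seteqP; split => w /=.
    move=> ew.
    have [n hn] : exists n : nat, n.+1%:R^-1 < (dist_set (h w) (S w) - e) / 2.
      by apply: exists_small_inv; lra.
    have n0 : 0 < n.+1%:R^-1 :> R by rewrite invr_gt0.
    have [m hm] := hu (h w) _ n0.
    exists n => //; exists m => //; split => /=; first by rewrite distrC.
    have := ds_lip (h w) (u m) (S0 w). move=> hl.
    move: hn hm hl; set r := n.+1%:R^-1; set a := dist_set _ _; set b := dist_set _ _; set c := `|_|; move=> *. lra.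
  move=> [n _ [m _ [/= h1 h2]]].
  have := ds_lip (u m) (h w) (S0 w); move: h1 h2.
  set r := n.+1%:R^-1; set a := dist_set _ _; set b := dist_set _ _; set c := `|_|; move=> *. lra.
apply: bigcupT_measurable => n; apply: bigcupT_measurable => m.
by apply: measurableI; [exact: hh | exact: meas_lt].
Qed.

End Meas.

Section Ulam.
Context {R : realType} {d : measure_display} {Omega : measurableType d}
  (P : probability Omega R) {H : normedModType R}.

Lemma meas_allj (N : nat) (F : nat -> set Omega) : (forall j, measurable (F j)) ->
  measurable [set w | forall j, (j < N)%N -> F j w].
Proof.
move=> mF.
have -> : [set w | forall j, (j < N)%N -> F j w] =
    \bigcap_j (if (j < N)%N then F j else setT).
  apply/seteqP; split => w /= hw j.
    by case: ifP => // /hw.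
  by move=> jN; have := hw j I; rewrite /= jN.
by apply: bigcapT_measurable => j; case: ifP.
Qed.

Lemma ulam (u : nat -> H)
  (hu : forall x r, 0 < r -> exists n, `|x - u n| < r)
  (S : Omega -> set H) (S0 : forall w, S w !=set0)
  (hS : forall y, measurable_fun setT (fun w => dist_set y (S w)))
  (r δ : R) : 0 < r -> 0 < δ ->
  exists N, (P [set w | forall j, (j < N)%N -> (r < dist_set (u j) (S w))%R] < δ%:E)%E.
Proof.
move=> r0 δ0.
pose B N := [set w | forall j, (j < N)%N -> r < dist_set (u j) (S w)].
have mB N : measurable (B N) by apply: meas_allj => j; exact: meas_lt.
have hom : {homo B : n m / (n <= m)%N >-> (m <= n)%O}.
  by move=> n m nm; rewrite subsetEset => w /= hw j jn; apply: hw; apply: leq_trans nm.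
have B0 : \bigcap_n B n = set0.
  apply/seteqP; split => // w /= hw.
  have [s Ss] := S0 w; have [j hj] := hu s r r0.
  have := hw j.+1 I j (ltnSn j); have := ds_le (u j) Ss.
  rewrite distrC in hj; move: hj; set a := `|_|; set b := dist_set _ _.
  move=> *; lra.
have fin0 : (P (B 0%N) < +oo)%E.
  by apply: (le_lt_trans (probability_le1 P (mB 0%N))); rewrite ltry.
have hc := @nonincreasing_cvg_mu _ _ _ P B fin0 mB (bigcapT_measurable mB) hom.
rewrite B0 measure0 in hc.
have := hc _ (nbhs_open_ereal_lt (f := fun _ => δ) δ0).
move=> [N0 _ hN]; exists N0; exact: (hN N0 (leqnn N0)).
Qed.

End Ulam.

Section Cpt.
Context {R : realType} {H : completeNormedModType R}.

Lemma ultra_seq (F : set_system H) (B : H -> set H) (s : seq H) :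
  UltraFilter F -> F [set x | exists2 y, y \in s & B y x] ->
  exists2 y, y \in s & F (B y).
Proof.
move=> UF; have PF : ProperFilter F := @ultra_proper _ F UF.
elim: s => [|y s IH] /= hF.
  by exfalso; apply: (@filter_not_empty _ F); apply: filterS hF => x [].
have [Fy|Fny] := in_ultra_setVsetC (B y) UF; first by exists y => //; rewrite inE eqxx.
have [z zs Fz] : exists2 z, z \in s & F (B z).
  apply: IH; apply: filterS (filterI hF Fny) => x [[z]].
  rewrite inE => /orP[/eqP -> //|zs Bz] _; by exists z.
by exists z => //; rewrite inE zs orbT.
Qed.

Lemma tb_compact (K : set H) : closed K ->
  (forall k : nat, exists s : seq H,
      K `<=` [set x | exists2 y, y \in s & `|y - x| < k.+1%:R^-1]) ->
  compact K.
Proof.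
move=> cK tb; rewrite compact_ultra => F UF FK.
have PF : ProperFilter F := @ultra_proper _ F UF.
have cF : cauchy F.
  apply: cauchy_exP => e e0.
  have [k hk] := exists_small_inv e0.
  have [s hs] := tb k.
  have [y _ Fy] := @ultra_seq F (fun y x => `|y - x| < k.+1%:R^-1) s UF (filterS hs FK).
  exists y; apply: filterS Fy => x /= hx; rewrite -ball_normE /ball_ /=.
  by apply: lt_trans hk.
have cvF : cvg F by apply: cauchy_cvg.
exists (lim F); split => //.
by apply: (@closed_cvg _ _ F PF id K cK FK).
Qed.

End Cpt.

Section Net.
Context {R : realType} {H : normedModType R}.

Lemma compact_net (K : set H) : compact K ->
  exists g : nat -> seq H, (forall n y, y \in g n -> K y) /\
    (forall x, K x -> forall n, exists2 y, y \in g n & `|y - x| < n.+1%:R^-1).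
Proof.
move=> cK.
have h n : exists s : seq H, (forall y, y \in s -> K y) /\
    (forall x, K x -> exists2 y, y \in s & `|y - x| < n.+1%:R^-1).
  move: cK; rewrite compact_cover => /(_ H K (fun y => ball y n.+1%:R^-1)).
  case.
  - by move=> y _; exact: ball_open.
  - move=> x Kx; exists x => //; apply: ballxx; by rewrite invr_gt0.
  move=> D' sD' cov; exists (finmap.enum_fset D'); split.
    by move=> y yD; have := sD' y yD; rewrite in_setE.
  move=> x /cov [y /= yD]; rewrite -ball_normE /ball_ /= => hy.
  by exists y.
have [g hg] := choice h.
by exists g; split => [n y|x Kx n]; [exact: (hg n).1 | exact: (hg n).2].
Qed.

End Net.

Section Tight0.
Context {R : realType} {d : measure_display} {Omega : measurableType d}
  (P : probability Omega R) {H : normedModType R}.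

Lemma meas_alls (s : seq H) (f : H -> set Omega) : (forall y, measurable (f y)) ->
  measurable [set w | forall y, y \in s -> f y w].
Proof.
move=> mf; elim: s => [|y s IH].
  have -> : [set w | forall y, y \in [::] -> f y w] = setT by apply/seteqP; split.
  exact: measurableT.
have -> : [set w | forall z, z \in y :: s -> f z w] =
    f y `&` [set w | forall y, y \in s -> f y w].
  apply/seteqP; split => w /=.
    by move=> h; split => [|z zs]; apply: h; rewrite inE ?eqxx ?zs ?orbT.
  by move=> [fy h] z; rewrite inE => /orP[/eqP -> //|]; exact: h.
exact: measurableI.
Qed.

Lemma closed_fin (s : seq H) (c : R) :
  closed [set z | exists2 y, y \in s & `|y - z| <= c].
Proof.
elim: s => [|y s IH].
  have -> : [set z : H | exists2 y, y \in [::] & `|y - z| <= c] = set0 :> set H.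
    by apply/seteqP; split => // z [].
  exact: closed0.
have -> : [set z : H | exists2 y', y' \in y :: s & `|y' - z| <= c] =
    closed_ball_ Num.Def.normr y c `|` [set z | exists2 y, y \in s & `|y - z| <= c].
  apply/seteqP; split => z /=.
    move=> [y']; rewrite inE => /orP[/eqP -> h|ys h]; first by left.
    by right; exists y'.
  by move=> [h|[y' ys h]]; [exists y; rewrite ?inE ?eqxx | exists y'; rewrite // inE ys orbT].
apply: closedU => //; exact: closed_closed_ball_.
Qed.

Lemma ulam_seq (u : nat -> H)
  (hu : forall x r, 0 < r -> exists n, `|x - u n| < r)
  (S : Omega -> set H) (S0 : forall w, S w !=set0)
  (hS : forall y, measurable_fun setT (fun w => dist_set y (S w)))
  (r δ : R) : 0 < r -> 0 < δ ->
  exists s : seq H, (P [set w | forall y, y \in s -> (r < dist_set y (S w))%R] < δ%:E)%E.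
Proof.
move=> r0 δ0; have [N hN] := ulam P hu S0 hS r0 δ0.
exists (map u (iota 0 N)); apply: le_lt_trans hN; apply: le_measure.
- rewrite inE; apply: meas_alls => y; exact: meas_lt.
- rewrite inE; apply: meas_allj => j; exact: meas_lt.
move=> w /= h j jN; apply: h; apply/mapP; exists j => //.
by rewrite mem_iota.
Qed.

End Tight0.

Section Tight.
Context {R : realType} {d : measure_display} {Omega : measurableType d}
  (P : probability Omega R) {H : completeNormedModType R}.

Lemma tight (u : nat -> H)
  (hu : forall x r, 0 < r -> exists n, `|x - u n| < r)
  (SA : Omega -> set H) (SA0 : forall w, SA w !=set0)
  (hSA : forall y, measurable_fun setT (fun w => dist_set y (SA w)))
  (T : nat -> Omega -> set H) (T0 : forall t w, T t w !=set0)
  (hTm : forall t y, measurable_fun setT (fun w => dist_set y (T t w)))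
  (hT : forall t (s : seq H) c,
     (P [set w | forall y, y \in s -> (c < dist_set y (T t w))%R] <=
      P [set w | forall y, y \in s -> (c < dist_set y (SA w))%R])%E)
  (x : nat -> Omega -> H)
  (hx : forall t y, measurable_fun setT (fun w => `|y - x t w|))
  (rho : nat -> R)
  (hrho : forall r, 0 < r -> exists N, forall t, (N <= t)%N -> rho t <= r)
  (hxT : forall t, {ae P, forall w, forall y,
                       `|y - x t w| <= dist_set y (T t w) + rho t})
  (δ : R) : 0 < δ ->
  exists K : set H, compact K /\ forall t, exists M : set Omega,
    [/\ measurable M, (P M <= δ%:E)%E &
        forall w, ~ M w -> K (x t w) /\ forall z, T t w = [set z] -> K z].
Proof.
move=> δ0.
pose c (k : nat) : R := k.+1%:R^-1 / 2.
have c0 k : 0 < c k by rewrite /c divr_gt0 // invr_gt0.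
have ck k : c k < k.+1%:R^-1.
  by have := c0 k; rewrite /c; set a := k.+1%:R^-1; move=> *; lra.
pose G (F : seq H) k t :=
  [set w | forall y, y \in F -> (c k / 2 < dist_set y (T t w))%R] `|`
  [set w | forall y, y \in F -> (c k < `|y - x t w|)%R].
have mT (F : seq H) (k t : nat) : measurable [set w | forall y, y \in F -> (c k / 2 < dist_set y (T t w))%R].
  apply: (@meas_alls _ _ _ _ F (fun y => [set w | (c k / 2 < dist_set y (T t w))%R])) => y.
  exact: meas_lt.
have mX (F : seq H) (k t : nat) : measurable [set w | forall y, y \in F -> (c k < `|y - x t w|)%R].
  apply: (@meas_alls _ _ _ _ F (fun y => [set w | (c k < `|y - x t w|)%R])) => y.
  exact: meas_lt.
have mG (F : seq H) (k t : nat) : measurable (G F k t) by apply: measurableU.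
have hk k : exists F, forall t, (P (G F k t) <= (δ / (2 ^ k.+1)%:R)%:E)%E.
  pose δ' := δ / (2 ^ k.+1)%:R / 2.
  have δ'0 : 0 < δ' by rewrite /δ' !divr_gt0 // ltr0n expn_gt0.
  have [sA hA] := ulam_seq P hu SA0 hSA (divr_gt0 (c0 k) (ltr0Sn _ 1)) δ'0.
  have [Tk hTk] := hrho _ (divr_gt0 (c0 k) (ltr0Sn _ 1)).
  have hsx t : exists s : seq H,
      (P [set w | forall y, y \in s -> (c k < dist_set y [set x t w])%R] < δ'%:E)%E.
    apply: (@ulam_seq _ _ _ P _ u hu (fun w => [set x t w])); last 2 first.
    - exact: c0 k.
    - exact: δ'0.
    - by move=> w; exists (x t w).
    move=> y; have -> : (fun w => dist_set y [set x t w]) = fun w => `|y - x t w|.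
      by apply: funext => w; rewrite ds1.
    exact: hx.
  have [sx hsx'] := choice hsx.
  exists (sA ++ flatten (map sx (iota 0 Tk))) => t.
  set F := sA ++ _.
  have h1 : (P [set w | forall y, y \in F -> (c k / 2 < dist_set y (T t w))%R]
              <= δ'%:E)%E.
    apply: (le_trans _ (le_trans (hT t sA (c k / 2)) (ltW hA))).
    apply: le_measure; rewrite ?inE; [exact: mT|exact: mT|].
    by move=> w /= h y ys; apply: h; rewrite mem_cat ys.
  have h2 : (P [set w | forall y, y \in F -> (c k < `|y - x t w|)%R] <= δ'%:E)%E.
    case: (ltnP t Tk) => tT.
      apply: le_trans (ltW (hsx' t)); apply: le_measure; rewrite ?inE.
      - exact: mX.
      - apply: (@meas_alls _ _ _ _ _ (fun y => [set w | (c k < dist_set y [set x t w])%R])) => y.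
        apply: meas_lt; have -> : (fun w => dist_set y [set x t w]) = fun w => `|y - x t w|.
          by apply: funext => w; rewrite ds1.
        exact: hx.
      move=> w /= h y ys; rewrite ds1; apply: h; rewrite mem_cat; apply/orP; right.
      by apply/flatten_mapP; exists t => //; rewrite mem_iota.
    have [N [mN PN sN]] := hxT t.
    apply: le_trans (_ : (P ([set w | forall y, y \in sA ->
        (c k / 2 < dist_set y (T t w))%R] `|` N) <= δ'%:E)%E).
      apply: le_measure; rewrite ?inE; [exact: mX| apply: measurableU => //; exact: mT|].
      move=> w /= h; have [Nw|Nw] := pselect (N w); first by right.
      left => y ys.
      have hw : forall y, `|y - x t w| <= dist_set y (T t w) + rho t.
        by apply: contrapT => hn; apply: Nw; apply: sN.
      have := hw y; have := h y; rewrite mem_cat ys => /(_ isT).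
      have := hTk t tT; move: (c k) (rho t) (dist_set y (T t w)) `|y - x t w|.
      move=> *; lra.
    apply: le_trans (measureU2 P _ mN) _; first exact: mT.
    set zN := (X in (_ + X <= _)%E); have -> : zN = 0%E by exact: PN.
    by rewrite adde0; apply: le_trans (hT t sA (c k / 2)) (ltW hA).
  apply: le_trans (measureU2 P (mT F k t) (mX F k t)) _.
  apply: le_trans (leeD h1 h2) _.
  by rewrite -EFinD lee_fin /δ'; lra.
have [F hF] := choice hk.
pose K := \bigcap_k [set z | exists2 y, y \in F k & `|y - z| <= c k].
exists K; split.
  apply: tb_compact.
    by apply: closed_bigI => k _; exact: closed_fin.
  move=> k; exists (F k) => z Kz; have [y yF hy] := Kz k I.
  by exists y => //; apply: le_lt_trans hy (ck k).
move=> t; exists (\bigcup_k G (F k) k t); split.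
- by apply: bigcupT_measurable => k; exact: mG.
- have mGk : forall k, measurable (G (F k) k t) by move=> k; exact: mG.
  have hs := (@measure_sigma_subadditive _ _ _ P (\bigcup_k G (F k) k t)
     (fun k => G (F k) k t) mGk (bigcupT_measurable _ mGk) (@subset_refl _ _)).
  apply: (le_trans hs).
  apply: (le_trans (@lee_nneseries R (fun k => P (G (F k) k t))
     (fun k => (δ / (2 ^ k.+1)%:R)%:E) xpredT 0 (fun k _ _ => measure_ge0 _ _)
     (fun k _ => hF k t))).
  have := @epsilon_trick R (fun _ => 0%E) δ xpredT (fun _ => lexx 0%E) (ltW δ0).
  move=> h; rewrite (eseries0 (fun _ _ _ => erefl)) add0e in h.
  apply: le_trans h.
  by rewrite le_eqVlt; apply/orP; left; apply/eqP; apply: eq_eseriesr => k _; rewrite add0e.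
move=> w hw; split.
  move=> k _; apply: contrapT => hn; apply: hw; exists k => //; right => y yF.
  by rewrite ltNge; apply/negP => hle; apply: hn; exists y.
move=> z Tz k _; apply: contrapT => hn; apply: hw; exists k => //; left => y yF.
rewrite ltNge; apply/negP => hle; apply: hn; exists y => //.
move: hle; rewrite Tz ds1; have := c0 k; move: (c k) `|y - z|; move=> *; lra.
Qed.

End Tight.

Section Bad.
Context {R : realType} {H : normedModType R}.

Lemma compact_normbd (K : set H) : compact K -> exists M, forall x, K x -> `|x| <= M.
Proof.
move=> /compact_bounded [M0 [_ hM]]; exists (M0 + 1) => x Kx.
by apply: (hM (M0 + 1) _ x Kx); rewrite ltrDl.
Qed.

Lemma sup_ub_K (K : set H) (ph : H -> H) (S : set H) (x0 : H) :
  continuous ph -> compact K -> S !=set0 -> K x0 ->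
  dist_set (ph x0) S <= sup [set dist_set (ph x) S | x in K].
Proof.
move=> cph cK [s Ss] Kx0.
have cK' : compact [set ph x | x in K].
  by apply: continuous_compact => //; exact: continuous_subspaceT.
have [M hM] := compact_normbd cK'.
apply: ub_le_sup; last by exists x0.
exists (M + `|s|) => _ [x Kx <-].
apply: le_trans (ds_le (ph x) Ss) _.
apply: le_trans (ler_normB _ _) _; apply: lerD => //; apply: hM; by exists x.
Qed.

Lemma cont_dist_pt (ph : H -> H) (S : set H) (x : H) (e : R) :
  continuous ph -> S !=set0 -> e < dist_set (ph x) S ->
  exists2 δ, 0 < δ & forall y, `|x - y| < δ -> e < dist_set (ph y) S.
Proof.
move=> cph S0 ex.
have e0 : 0 < dist_set (ph x) S - e by lra.
have := cvgr_dist_lt _ _ (cph x) _ e0.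
move=> /(_ (nbhs_filter x)) /nbhs_ballP [δ δ0 hδ]; exists δ => // y hy.
have := hδ y; rewrite -ball_normE /ball_ /= => /(_ hy) h.
have := ds_lip (ph x) (ph y) S0.
move: h; set a := `|_|; set b := dist_set _ _; set c := dist_set _ _.
move=> *; lra.
Qed.

Lemma meas_exs {d : measure_display} {Omega : measurableType d}
  (s : seq H) (f : H -> set Omega) : (forall y, measurable (f y)) ->
  measurable [set w | exists2 y, y \in s & f y w].
Proof.
move=> mf; elim: s => [|y s IH].
  have -> : [set w | exists2 y, y \in [::] & f y w] = set0 :> set Omega.
    by apply/seteqP; split => // w [].
  exact: measurable0.
have -> : [set w | exists2 z, z \in y :: s & f z w] =
    f y `|` [set w | exists2 y, y \in s & f y w].
  apply/seteqP; split => w /=.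
    move=> [z]; rewrite inE => /orP[/eqP -> h|zs h]; first by left.
    by right; exists z.
  by move=> [h|[z zs h]]; [exists y; rewrite ?inE ?eqxx | exists z; rewrite // inE zs orbT].
exact: measurableU.
Qed.

Lemma meas_bad {d : measure_display} {Omega : measurableType d} (u : nat -> H)
  (hu : forall x r, 0 < r -> exists n, `|x - u n| < r)
  (S : Omega -> set H) (S0 : forall w, S w !=set0)
  (hS : forall y, measurable_fun setT (fun w => dist_set y (S w)))
  (ph : Omega -> H -> H) (hc : forall w, continuous (ph w))
  (hph : forall x y r, measurable [set w | `|y - ph w x| < r])
  (K : set H) (cK : compact K) (e : R) : 0 < e ->
  measurable [set w | e < sup [set dist_set (ph w x) (S w) | x in K]].
Proof.
move=> e0; have [g [gK hg]] := compact_net cK.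
have -> : [set w | e < sup [set dist_set (ph w x) (S w) | x in K]] =
   \bigcup_n [set w | exists2 y, y \in g n & e < dist_set (ph w y) (S w)].
  apply/seteqP; split => w /=.
    move=> h; have [x Kx hx] : exists2 x, K x & e < dist_set (ph w x) (S w).
      have [[z Kz]|K0] := pselect (K !=set0).
        have ne : [set dist_set (ph w x) (S w) | x in K] !=set0.
          by exists (dist_set (ph w z) (S w)), z.
        case: (sup_gt ne h) => v [x Kx hxv] hv.
        by exists x => //; rewrite hxv.
      exfalso; move: h; have -> : [set dist_set (ph w x) (S w) | x in K] = set0.
        apply/seteqP; split => // v [x Kx _]; apply: K0; by exists x.
      by rewrite sup0; lra.
    have [δ δ0 hδ] := cont_dist_pt (hc w) (S0 w) hx.
    have [n hn] := exists_small_inv δ0.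
    have [y yg hy] := hg x Kx n.
    exists n => //; exists y => //; apply: hδ; rewrite distrC; exact: lt_trans hn.
  move=> [n _ [y yg hy]]; apply: lt_le_trans hy _.
  exact: sup_ub_K (hc w) cK (S0 w) (gK n y yg).
apply: bigcupT_measurable => n.
apply: (@meas_exs _ _ _ (fun y => [set w | e < dist_set (ph w y) (S w)])) => y.
exact: (meas_dist_comp hu S0 hS (h := fun w => ph w y)).
Qed.

End Bad.

Section Aux.
Context {R : realType}.

Lemma dense_seq (H : completeNormedModType R) : separable_hilbert H ->
  exists u : nat -> H, forall x r, 0 < r -> exists n, `|x - u n| < r.
Proof.
move=> [_ [D [cD dD]]].
have [x0 Dx0] : D !=set0.
  have [z [_ Dz]] := dD setT (ex_intro _ 0 I) openT; by exists z.
move: cD => /pfcard_geP [D0|/surjfunPex [u Du]].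
  by rewrite D0 in Dx0.
exists u => x r r0.
have [z [bz Dz]] := dD (ball x r) (ex_intro _ x (ballxx x r0)) (ball_open x r).
move: Dz bz; rewrite Du => -[n _ <-] bz; exists n.
by move: bz; rewrite -ball_normE /ball_.
Qed.

Context {d : measure_display} {Omega : measurableType d} (P : probability Omega R).

Lemma ae_theta (theta : int -> Omega -> Omega) (Q : Omega -> Prop) :
  metric_dynamical_system P theta -> {ae P, forall w, Q w} ->
  forall s, {ae P, forall w, Q (theta s w)}.
Proof.
move=> [_ _ thm thP] [N [mN PN sN]] s.
have mN' : measurable (theta s @^-1` N).
  by have := thm s measurableT N mN; rewrite setTI.
exists (theta s @^-1` N); split => //.
  by rewrite thP.
by move=> w /= hw; apply: sN.
Qed.

Lemma ae2 (Q1 Q2 Q3 : Omega -> Prop) :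
  {ae P, forall w, Q1 w} -> {ae P, forall w, Q2 w} ->
  (forall w, Q1 w -> Q2 w -> Q3 w) -> {ae P, forall w, Q3 w}.
Proof.
move=> [N1 [m1 P1 s1]] [N2 [m2 P2 s2]] h.
exists (N1 `|` N2); split.
- exact: measurableU.
- apply/eqP; rewrite eq_le measure_ge0 andbT.
  apply: le_trans (measureU2 P m1 m2) _.
  set z1 := (X in (X + _)%E); set z2 := (X in (_ + X)%E).
  have -> : z1 = 0%E by exact: P1.
  have -> : z2 = 0%E by exact: P2.
  by rewrite adde0.
move=> w /= hw; apply: contrapT => hn; apply: hw; apply: h.
  by apply: contrapT => h1; apply: hn; left; apply: s1.
by apply: contrapT => h2; apply: hn; right; apply: s2.
Qed.

End Aux.

Lemma cocycle_back {Omega H : Type} (theta : int -> Omega -> Omega)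
  (phi : nat -> Omega -> H -> H) (x : nat -> H) (w : Omega) :
  (forall m n w, theta (m + n) w = theta m (theta n w)) ->
  (forall w x, phi 0%N w x = x) ->
  (forall s t w x, phi (s + t)%N w x = phi t (theta s%:Z w) (phi s w x)) ->
  (forall n : nat, phi 1%N (theta (- n.+1%:Z) w) (x n.+1) = x n) ->
  forall t : nat, phi t (theta (- t%:Z) w) (x t) = x 0%N.
Proof.
move=> thD phi0 phiD hb; elim => [|t IH]; first by rewrite phi0.
have -> : phi t.+1 (theta (- t.+1%:Z) w) (x t.+1) =
   phi t (theta 1 (theta (- t.+1%:Z) w)) (phi 1%N (theta (- t.+1%:Z) w) (x t.+1)).
  exact: (phiD 1%N t).
rewrite hb -thD.
have -> : (1 + - t.+1%:Z) = - t%:Z by lia.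
exact: IH.
Qed.

Unset Implicit Arguments.

Theorem proposition2 (R : realType) (d : measure_display)
  (Omega : measurableType d) (P : probability Omega R)
  (theta : int -> Omega -> Omega)
  (H : completeNormedModType R)
  (phi : nat -> Omega -> H -> H)
  (A : Omega -> set H) (mu : R) (alpha beta : Omega -> R) :
  separable_hilbert H ->
  metric_dynamical_system P theta ->
  random_dynamical_system theta phi ->
  random_point P A ->
  phi_invariant P theta phi A ->
  0 < mu ->
  measurable_fun [set: Omega] alpha ->
  measurable_fun [set: Omega] beta ->
  (forall w, 0 < alpha w /\ alpha w < beta w /\ beta w < 1) ->
  {ae P, forall w, exists x y, U_set theta phi A mu alpha beta w x /\
                               U_set theta phi A mu alpha beta w y /\ x <> y} ->
  (exists x : nat -> Omega -> H,
     (forall n, random_point P (fun w => [set x n w])) /\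
     {ae P, forall w, dist_set (x 0%N w) (A w) <= alpha w /\ ~ A w (x 0%N w) /\
                      backward_seq theta phi A mu beta w (fun n => x n w)}) ->
  ~ synchronizes P theta phi.
Proof.
move=> hsep hmds hrds hA hinv mu0 malpha mbeta hab _ [x [hxr hxae]].
move=> [At [[[At0 Atc Atm] Atinv Atconv] Atsing]].
have [u hu] := dense_seq hsep.
move: (hmds) => [th0 thD thm thP].
move: hrds => [phi0 phiD phic phim [Fst [hF1 hF2 hF3 hF4]]].
move: hA => [A0 Asing Am].
have hx t y : measurable_fun setT (fun w => `|y - x t w|).
  have [_ _ m] := hxr t; have := m y.
  have -> // : (fun w => dist_set y [set x t w]) = fun w => `|y - x t w|.
  by apply: funext => w; rewrite ds1.
have Tm t y : measurable_fun setT (fun w => dist_set y (A (theta (- t%:Z) w))).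
  exact: (measurableT_comp (Am y) (thm _)).
have hT t (s : seq H) c :
    (P [set w | forall y, y \in s -> (c < dist_set y (A (theta (- t%:Z) w)))%R] <=
     P [set w | forall y, y \in s -> (c < dist_set y (A w))%R])%E.
  have mS : measurable [set w | forall y, y \in s -> (c < dist_set y (A w))%R].
    apply: (@meas_alls _ _ _ _ _ (fun y => [set w | (c < dist_set y (A w))%R])) => y.
    exact: meas_lt.
  by rewrite -(thP (- t%:Z) _ mS).
pose rho (t : nat) := expR (- (mu * t%:R)).
have rho0 t : 0 < rho t by exact: expR_gt0.
have hrho r : 0 < r -> exists N, forall t, (N <= t)%N -> rho t <= r.
  move=> r0; have [n hn] := exists_small_inv (mulr_gt0 r0 mu0).
  exists n.+1 => t tn; rewrite /rho expRN -div1r ler_pdivrMr ?expR_gt0 //.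
  have h1 := expR_ge1Dx (mu * t%:R).
  have h2 : n.+1%:R <= t%:R :> R by rewrite ler_nat.
  move: hn; rewrite -div1r ltr_pdivrMr ?ltr0Sn // => h3.
  have h4 : r * mu * n.+1%:R <= r * mu * t%:R by rewrite ler_pM2l ?mulr_gt0.
  have h5 : r * (mu * t%:R) <= r * expR (mu * t%:R).
    by rewrite ler_pM2l //; move: h1; set a := expR _; set b := mu * _; lra.
  move: h3 h4 h5; rewrite !mulrA; set a := r * mu * _; set b := r * mu * _.
  set c := r * expR _; lra.
have hxT t : {ae P, forall w, forall y,
      `|y - x t w| <= dist_set y (A (theta (- t%:Z) w)) + rho t}.
  have h1 := @ae_theta _ _ _ P theta (fun w => exists a, A w = [set a]) hmds Asing (- t%:Z).
  apply: (ae2 hxae h1) => w [_ [_ [_ hb]]] [a ha] y.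
  have := hb t; rewrite ha !ds1 => hd.
  have [a0 [ab b1]] := hab w.
  have h2 := ler_distD a y (x t w); rewrite (distrC a) in h2.
  have h3 : beta w * rho t <= rho t by rewrite ger_pMl // ltW.
  move: hd h2 h3; rewrite -/(rho t).
  set p := `|y - x t w|; set q := `|y - a|; set s := `|x t w - a|.
  set z := beta w * _; move=> *; lra.
have [K [cK hK]] := tight hu A0 Am (T := fun t w => A (theta (- t%:Z) w))
   (fun t w => A0 _) Tm hT hx hrho hxT (δ := 4^-1) ltac:(by []).
pose E (m : nat) := [set w | m.+1%:R^-1 < dist_set (x 0%N w) (A w)].
have mE m : measurable (E m).
  apply: (meas_dist_comp hu A0 Am (h := x 0%N)) => y r; exact: meas_gt (hx 0%N y).
have homE : {homo E : n m / (n <= m)%N >-> (n <= m)%O}.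
  move=> n k nk; rewrite subsetEset => w /=; apply: le_lt_trans.
  by rewrite lef_pV2 ?posrE ?ler_nat.
have hEU : P (\bigcup_m E m) = 1%E.
  have hae : {ae P, forall w, (\bigcup_m E m) w}.
    apply: (ae2 hxae Asing) => w [_ [hn _]] [a ha].
    have d0 : 0 < dist_set (x 0%N w) (A w).
      rewrite ha ds1 normr_gt0 subr_eq0; apply/eqP => e; apply: hn; rewrite ha e //.
    have [m hm] := exists_small_inv d0; by exists m.
  case: hae => N [mN PN sN].
  apply/eqP; rewrite eq_le probability_le1 ?andTb; last exact: bigcupT_measurable.
  have PN' : P N = 0%E by exact: PN.
  have <- : P (~` N) = 1%E by rewrite probability_setC // PN' sube0.
  apply: le_measure; rewrite ?inE; [exact: measurableC| exact: bigcupT_measurable|].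
  move=> w /= Nw; apply: contrapT => h; apply: Nw; apply: sN; exact: h.
have [m hm] : exists m, ((2^-1)%:E < P (E m))%E.
  have hc := @nondecreasing_cvg_mu _ _ _ P E mE (bigcupT_measurable _ mE) homE.
  move: hc; set Z := (X in _ --> X); have -> : Z = 1%E by exact: hEU.
  move=> hc.
  have h12 : (fun _ : R => 2^-1 : R) 1 < 1 by rewrite invf_lt1 // ltr1n.
  have := hc _ (@nbhs_open_ereal_gt R 1 (fun _ => 2^-1) h12).
  by move=> [N0 _ hN]; exists N0; exact: hN N0 (leqnn _).
pose eps : R := m.+1%:R^-1 / 2.
have eps0 : 0 < eps by rewrite /eps divr_gt0 // invr_gt0.
pose bad (t : nat) := [set w | eps <
   sup [set dist_set (phi t (theta (- t%:Z) w) z) (At w) | z in K]].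
have Pbad t : ((4^-1)%:E < P (bad t))%E.
  have [M [mM PM hMw]] := hK t.
  have hph z y r : measurable [set w | `|y - phi t (theta (- t%:Z) w) z| < r].
    have hb : borelH (ball y r) by apply: sub_sigma_algebra; exact: ball_open.
    have [_ sub] := hF1 0 t%:Z ltac:(by []).
    have Fm := sub _ (hF4 t z _ hb).
    have := thm (- t%:Z) measurableT _ Fm; rewrite setTI.
    congr measurable; apply/seteqP; split => w /=; by rewrite -ball_normE /ball_.
  have mbad : measurable (bad t).
    exact: (meas_bad hu At0 Atm (ph := fun w => phi t (theta (- t%:Z) w))
             (fun w => phic t _) hph cK eps0).
  have h1 := @ae_theta _ _ _ P theta (fun w => exists a, A w = [set a]) hmds Asing (- t%:Z).
  have h2 := @ae_theta _ _ _ P theta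
     (fun w => phi t w @` A w = A (theta t%:Z w)) hmds (hinv t) (- t%:Z).
  have q1 := ae2 hxae Asing (fun w a b => conj a b).
  have q2 := ae2 q1 Atsing (fun w a b => conj a b).
  have q3 := ae2 q2 h1 (fun w a b => conj a b).
  have [N [mN PN sN]] := ae2 q3 h2 (fun w a b => conj a b).
  have sub : E m `<=` bad t `|` M `|` N.
    move=> w Ew; have [Nw|Nw] := pselect (N w); first by right.
    have Qw := contrapT (fun hq => Nw (sN w hq)).
    have [Mw|Mw] := pselect (M w); first by left; right.
    left; left.
    move: Qw => [[[[[hd0 [hnA [hbs _]]] [a ha]] [b hb]] [a' ha']] himg].
    rewrite ha' -thD subrr th0 ha image_set1 in himg.
    have ea : phi t (theta (- t%:Z) w) a' = a.
      by have : [set a] (phi t (theta (- t%:Z) w) a') by rewrite -himg.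
    have ex0 := cocycle_back thD phi0 phiD hbs t.
    have [Kx Ka] := hMw w Mw; have Ka' := Ka a' ha'.
    move: Ew; rewrite /E /= ha ds1 => Ew.
    have tri := ler_distD b (x 0%N w) a; rewrite (distrC b a) in tri.
    have s1 := sup_ub_K (phic t (theta (- t%:Z) w)) cK (At0 w) Kx.
    have s2 := sup_ub_K (phic t (theta (- t%:Z) w)) cK (At0 w) Ka'.
    have e1 : dist_set (phi t (theta (- t%:Z) w) (x t w)) (At w) = `|x 0%N w - b|.
      by rewrite ex0 hb ds1.
    have e2 : dist_set (phi t (theta (- t%:Z) w) a') (At w) = `|a - b|.
      by rewrite ea hb ds1.
    rewrite e1 in s1; rewrite e2 in s2.
    rewrite /bad /=; move: s1 s2 tri Ew; rewrite /eps.
    set S := sup _; set p := `|x 0%N w - b|; set q := `|a - b|.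
    set o := `|x 0%N w - a|; set v := m.+1%:R^-1; move=> s1 s2 tri Ew.
    have [h|h] : v / 2 < p \/ v / 2 < q.
      by case: (ltP (v / 2) p) => hp; [left|right]; lra.
    - exact: lt_le_trans h s1.
    - exact: lt_le_trans h s2.
  have le1 : (P (E m) <= P (bad t) + P M + P N)%E.
    have hmU : measurable (bad t `|` M `|` N).
      by apply: measurableU => //; exact: measurableU.
    apply: le_trans (@le_measure _ _ _ P _ _ (mem_set (mE m)) (mem_set hmU) sub) _.
    apply: le_trans (measureU2 P (measurableU _ _ mbad mM) mN) _.
    by apply: leeD => //; exact: measureU2.
  have PN' : P N = 0%E by exact: PN.
  rewrite PN' adde0 in le1.
  have fb : P (bad t) \is a fin_num.
    by rewrite ge0_fin_numE ?measure_ge0 // (le_lt_trans (probability_le1 P mbad)) ?ltry.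
  have fM : P M \is a fin_num.
    by rewrite ge0_fin_numE ?measure_ge0 // (le_lt_trans (probability_le1 P mM)) ?ltry.
  have fE : P (E m) \is a fin_num.
    by rewrite ge0_fin_numE ?measure_ge0 // (le_lt_trans (probability_le1 P (mE m))) ?ltry.
  move: le1 hm PM; rewrite -(fineK fb) -(fineK fM) -(fineK fE) -EFinD !lte_fin !lee_fin.
  set a1 := fine _; set a2 := fine _; set a3 := fine _; move=> *; lra.
have := Atconv K cK eps eps0.
have h14 : (fun _ : R => 4^-1 : R) 0 > 0 by rewrite invr_gt0.
move=> /(_ _ (@nbhs_open_ereal_lt R 0 (fun _ => 4^-1) h14)) [N0 _ hN].
have := hN N0 (leqnn _); have := Pbad N0; rewrite /bad /= => h1 h2.
by have := lt_trans h1 h2; rewrite ltxx.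
Qed.
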